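(* Let $G=(V,\mathcal E,w)$ be an undirected, connected, weighted graph, and let $\tau=0$ (no time-delay). Fix one of the six uncertainty structures listed in the context. For $\alpha>0$, let $\eta_i(\alpha)$ (resp. $\nu_e(\alpha)$) denote the agent (resp. link) centrality indices of the network obtained by replacing every weight $w(e)$ by $\alpha w(e)$. Then for all $\alpha>0$: - for all agents $i,j$ (agent-associated structures), $\eta_i(\alpha)>\eta_j(\alpha)$ if and only if $\eta_i(1)>\eta_j(1)$; - for all links $e,f$ (link-associated structures), $\nu_e(\alpha)>\nu_f(\alpha)$ if and only if $\nu_e(1)>\nu_f(1)$. That is, the order of precedence of agents and the ranking of links are invariant under uniform scaling of all link weights.
   Context: Graph matrices: - $E$ is the signed incidence matrix (arbitrary orientation) and $W=\mathrm{diag}(w(e))$. - $L=EWE^T$ is the Laplacian, $\Delta$ the diagonal weighted-degree matrix, $A=\Delta-L$ the weighted adjacency matrix. - $M_n=I_n-\frac1n\mathbf1\mathbf1^T$. The network is $$\dot x(t)=-L\,x(t-\tau)+B\,\xi(t),\qquad y=M_nx,$$ with $\xi$ a vector of mutually independent zero-mean Gaussian white noises with intensities $\sigma_k^2$. The six uncertainty structures are: - agent-associated (noises indexed by agents): dynamics noise $B=I_n$; sensor noise $B=L$; receiver noise $B=\Delta$; emitter noise $B=A$; - link-associated (noises indexed by links): communication noise $B=EW$; measurement noise $B=-E$. In each case $B$ is computed from the (scaled) weights. The performance is $$\rho_{ss}=\lim_{t\to\infty}\mathbb E[y^Ty]=\frac1{2\pi}\int\mathrm{Tr}[G^HG]d\omega,\qquad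 G(s)=M_n(sI+e^{-\tau s}L)^{-1}B\,\mathrm{diag}(\sigma_k).$$ Centralities are $\eta_i=\partial\rho_{ss}/\partial\sigma_i^2$ (agent noise) and $\nu_e=\partial\rho_{ss}/\partial\sigma_e^2$ (link noise). *)

(* Defs.v *)
From HB Require Import structures.
From mathcomp Require Import all_boot all_order all_algebra.
From mathcomp Require Import all_classical all_reals all_analysis.
From mathcomp Require Import complex.

Set Implicit Arguments.
Unset Strict Implicit.
Unset Printing Implicit Defensive.

Import Order.TTheory GRing.Theory Num.Theory.
Local Open Scope ring_scope.

(* Graphs: n agents ('I_n), m links ('I_m).  Link e joins the agents    *)
(* src e and dst e; the pair (src e, dst e) is an arbitrary orientation *)
(* of the undirected link e.  w e is the weight of link e.              *)

Definition simple_graph (n m : nat) (src dst : 'I_m -> 'I_n) : Prop :=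
  (forall e, src e != dst e) /\
  (forall e f, e != f ->
     ~ ((src e == src f) && (dst e == dst f) || (src e == dst f) && (dst e == src f))).

Definition adj (n m : nat) (src dst : 'I_m -> 'I_n) : rel 'I_n :=
  fun i j => [exists e, ((src e == i) && (dst e == j)) || ((src e == j) && (dst e == i))].

Definition connected_graph (n m : nat) (src dst : 'I_m -> 'I_n) : Prop :=
  forall i j : 'I_n, connect (adj src dst) i j.

Section GraphMatrices.
Variables (R : realType) (n m : nat) (src dst : 'I_m -> 'I_n) (w : 'I_m -> R).

Definition incidence : 'M[R]_(n, m) :=
  \matrix_(i, e) ((i == src e)%:R - (i == dst e)%:R).

Definition weight_mx : 'M[R]_m := \matrix_(e, f) ((e == f)%:R * w e).

Definition laplacian : 'M[R]_n := incidence *m weight_mx *m incidence^T.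

Definition degree_mx : 'M[R]_n :=
  \matrix_(i, j) ((i == j)%:R * \sum_(e < m | (src e == i) || (dst e == i)) w e).

Definition adjacency_mx : 'M[R]_n := degree_mx - laplacian.

End GraphMatrices.

Definition centering (R : realType) (n : nat) : 'M[R]_n :=
  1%:M - (n%:R)^-1 *: const_mx 1.

Inductive uncertainty :=
  | DynamicsNoise
  | SensorNoise
  | ReceiverNoise
  | EmitterNoise
  | CommunicationNoise
  | MeasurementNoise.

Definition agent_associated (s : uncertainty) : bool :=
  match s with
  | DynamicsNoise | SensorNoise | ReceiverNoise | EmitterNoise => true
  | CommunicationNoise | MeasurementNoise => false
  end.

Definition nnoise (n m : nat) (s : uncertainty) : nat :=
  if agent_associated s then n else m.

Definition input_mx (R : realType) (n m : nat) (src dst : 'I_m -> 'I_n)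
  (w : 'I_m -> R) (s : uncertainty) : 'M[R]_(n, nnoise n m s) :=
  match s as s0 return 'M[R]_(n, nnoise n m s0) with
  | DynamicsNoise => 1%:M
  | SensorNoise => laplacian src dst w
  | ReceiverNoise => degree_mx src dst w
  | EmitterNoise => adjacency_mx src dst w
  | CommunicationNoise => incidence R src dst *m weight_mx w
  | MeasurementNoise => - incidence R src dst
  end.

Local Open Scope complex_scope.

Definition cmx (R : realType) (p q : nat) (M : 'M[R]_(p, q)) : 'M[R[i]]_(p, q) :=
  map_mx (fun x => x%:C) M.

Definition ctr (R : realType) (p q : nat) (M : 'M[R[i]]_(p, q)) : 'M[R[i]]_(q, p) :=
  (map_mx conjc M)^T.

Section Performance.
Variables (R : realType) (n m : nat) (src dst : 'I_m -> 'I_n) (w : 'I_m -> R)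
  (s : uncertainty).

(* G(j omega) = M_n (j omega I + e^{-tau j omega} L)^{-1} B diag(sigma_k), tau = 0,
   where sigma2 k = sigma_k^2 is the intensity of noise k *)
Definition transfer (sigma2 : 'I_(nnoise n m s) -> R) (omega : R)
  : 'M[R[i]]_(n, nnoise n m s) :=
  cmx (centering R n) *m
  invmx ((Complex 0 omega) *: 1%:M + cmx (laplacian src dst w)) *m
  cmx (input_mx src dst w s) *m
  cmx (\matrix_(k, l) ((k == l)%:R * Num.sqrt (sigma2 k))).

Definition rho_ss (sigma2 : 'I_(nnoise n m s) -> R) : R :=
  fine (\int[lebesgue_measure]_(omega in [set: R])
          (@complex.Re R (\tr (ctr (transfer sigma2 omega) *m transfer sigma2 omega)))%:E)
  / (2 * pi).

Definition centrality (sigma2 : 'I_(nnoise n m s) -> R) (k : 'I_(nnoise n m s)) : R :=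
  derive1 (fun x : R => rho_ss (fun l => if l == k then x else sigma2 l)) (sigma2 k).

End Performance.

Arguments transfer {R n m} src dst w s sigma2 omega.
Arguments rho_ss {R n m} src dst w s sigma2.
Arguments centrality {R n m} src dst w s sigma2 k.

(* Main.v *)
Require Import Defs.
From HB Require Import structures.
From mathcomp Require Import all_boot all_order all_algebra.
From mathcomp Require Import all_classical all_reals all_analysis.
From mathcomp Require Import complex.
From mathcomp Require Import measurable_realfun.
From mathcomp Require Import ring lra.
Import Order.TTheory GRing.Theory Num.Theory.
Local Open Scope ring_scope.

Section Scal.
Variables (R : realType) (n m : nat) (src dst : 'I_m -> 'I_n) (w : 'I_m -> R).
Variable (a : R).

Lemma weight_mxZ : weight_mx (fun e => a * w e) = a *: weight_mx w.
Proof. by apply/matrixP => i j; rewrite !mxE mulrCA. Qed.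

Lemma laplacianZ : laplacian src dst (fun e => a * w e) = a *: laplacian src dst w.
Proof. by rewrite /laplacian weight_mxZ scalemxAl scalemxAr. Qed.

Lemma degree_mxZ : degree_mx src dst (fun e => a * w e) = a *: degree_mx src dst w.
Proof. by apply/matrixP => i j; rewrite !mxE -mulr_sumr mulrCA. Qed.

Lemma adjacency_mxZ : adjacency_mx src dst (fun e => a * w e) = a *: adjacency_mx src dst w.
Proof. by rewrite /adjacency_mx degree_mxZ laplacianZ scalerBr. Qed.

Definition cfac (s : uncertainty) : R :=
  match s with DynamicsNoise | MeasurementNoise => 1 | _ => a end.

Lemma input_mxZ s : input_mx src dst (fun e => a * w e) s = cfac s *: input_mx src dst w s.
Proof.
case: s => /=.
- by rewrite scale1r.
- exact: laplacianZ.
- exact: degree_mxZ.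
- exact: adjacency_mxZ.
- by rewrite weight_mxZ scalemxAr.
- by rewrite scale1r.
Qed.

Lemma laplacian_sym : (laplacian src dst w)^T = laplacian src dst w.
Proof.
rewrite /laplacian !trmx_mul trmxK mulmxA.
congr (_ *m _ *m _); apply/matrixP => i j; rewrite !mxE.
have [->|ne] := eqVneq i j; first by [].
by rewrite !mul0r.
Qed.
End Scal.

Section Cplx.
Variable R : realType.
Implicit Types x y : R[i].

Lemma ReD x y : complex.Re (x + y) = complex.Re x + complex.Re y.
Proof. by case: x; case: y. Qed.
Lemma ImD x y : complex.Im (x + y) = complex.Im x + complex.Im y.
Proof. by case: x; case: y. Qed.
Lemma ReM x y : complex.Re (x * y) = complex.Re x * complex.Re y - complex.Im x * complex.Im y.
Proof. by case: x; case: y. Qed.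
Lemma ImM x y : complex.Im (x * y) = complex.Re x * complex.Im y + complex.Im x * complex.Re y.
Proof. by case: x => a b; case: y => c d /=; rewrite addrC. Qed.
Lemma ReN x : complex.Re (- x) = - complex.Re x. Proof. by case: x. Qed.
Lemma ImN x : complex.Im (- x) = - complex.Im x. Proof. by case: x. Qed.
Lemma ReJ x : complex.Re (conjc x) = complex.Re x. Proof. by case: x. Qed.
Lemma ImJ x : complex.Im (conjc x) = - complex.Im x. Proof. by case: x. Qed.
Lemma ReV x : complex.Re (x^-1) = complex.Re x / (complex.Re x ^+ 2 + complex.Im x ^+ 2).
Proof. by case: x. Qed.
Lemma ImV x : complex.Im (x^-1) = - (complex.Im x / (complex.Re x ^+ 2 + complex.Im x ^+ 2)).
Proof. by case: x. Qed.
Lemma ReC (a : R) : complex.Re (a%:C)%C = a. Proof. by []. Qed.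
Lemma ImC (a : R) : complex.Im (a%:C)%C = 0. Proof. by []. Qed.

Lemma Re_sum (I : Type) (r : seq I) (P : pred I) (F : I -> R[i]) :
  complex.Re (\sum_(i <- r | P i) F i) = \sum_(i <- r | P i) complex.Re (F i).
Proof.
elim: r => [|x r IH]; first by rewrite !big_nil.
by rewrite !big_cons; case: ifP => // _; rewrite ReD IH.
Qed.
Lemma Im_sum (I : Type) (r : seq I) (P : pred I) (F : I -> R[i]) :
  complex.Im (\sum_(i <- r | P i) F i) = \sum_(i <- r | P i) complex.Im (F i).
Proof.
elim: r => [|x r IH]; first by rewrite !big_nil.
by rewrite !big_cons; case: ifP => // _; rewrite ImD IH.
Qed.
End Cplx.

Section Inv.
Variables (R : realType) (n : nat).

Lemma conj_quad (S : 'M[R]_n) (u : 'rV[R[i]]_n) : S^T = S ->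
  conjc ((u *m cmx S *m ctr u) 0 0) = (u *m cmx S *m ctr u) 0 0.
Proof.
move=> hS.
have -> : conjc ((u *m cmx S *m ctr u) 0 0) = (map_mx conjc (u *m cmx S *m ctr u)) 0 0.
  by rewrite [RHS]mxE.
rewrite !map_mxM.
have -> : map_mx conjc (cmx S) = cmx S.
  by apply/matrixP => i j; rewrite !mxE conjc_real.
have -> : map_mx conjc (ctr u) = u^T.
  by apply/matrixP => i j; rewrite !mxE conjcK.
have tr1 (A : 'M[R[i]]_1) : A 0 0 = A^T 0 0 by rewrite mxE.
rewrite [LHS]tr1 !trmx_mul trmxK.
have -> : (cmx S)^T = cmx S by rewrite /cmx map_trmx hS.
by rewrite mulmxA.
Qed.

Lemma X_unit (S : 'M[R]_n) (y : R) : S^T = S -> y != 0 ->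
  ((Complex 0 y) *: 1%:M + cmx S) \in unitmx.
Proof.
move=> hS y0; rewrite -row_free_unit; apply: inj_row_free => u hu.
have h0 : (u *m ((Complex 0 y) *: 1%:M + cmx S) *m ctr u) 0 0 = 0.
  by rewrite hu mul0mx mxE.
move: h0; rewrite mulmxDr -scalemxAr mulmx1 mulmxDl -scalemxAl.
have eD (A B : 'M[R[i]]_1) : (A + B) 0 0 = A 0 0 + B 0 0 by rewrite mxE.
have eZ (c : R[i]) (A : 'M[R[i]]_1) : (c *: A) 0 0 = c * A 0 0 by rewrite mxE.
rewrite eD eZ => /(congr1 (@complex.Im R)).
have hq : complex.Im ((u *m cmx S *m ctr u) 0 0) = 0.
  have := congr1 (@complex.Im R) (conj_quad S u hS).
  rewrite ImJ => h; lra.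
rewrite ImD hq addr0 ImM /= mul0r add0r => /eqP; rewrite mulf_eq0 (negbTE y0) /= => /eqP.
set p := (u *m ctr u) 0 0.
have -> : p = \sum_j u 0 j * conjc (u 0 j).
  by rewrite /p mxE; apply: eq_bigr => j _; rewrite !mxE.
rewrite Re_sum => hs.
have hz : forall j, complex.Re (u 0 j * conjc (u 0 j)) = 0.
  move=> j; apply: (psumr_eq0P _ hs) => // k _.
  by rewrite ReM ReJ ImJ mulrN opprK -!expr2 addr_ge0 ?sqr_ge0.
apply/matrixP => i j; rewrite (ord1 i) mxE.
move: (hz j); rewrite ReM ReJ ImJ mulrN opprK -!expr2 => /eqP.
rewrite paddr_eq0 ?sqr_ge0 // !sqrf_eq0 => /andP[/eqP h1 /eqP h2].
by case: (u 0 j) h1 h2 => a b /= -> ->.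
Qed.
End Inv.

Arguments cfac {R} a s.
Arguments laplacian_sym {R n m} src dst w.
Arguments X_unit {R n S y}.
Section Transfer.
Variables (R : realType) (n m : nat) (src dst : 'I_m -> 'I_n) (w : 'I_m -> R)
  (s : uncertainty) (sigma2 : 'I_(nnoise n m s) -> R) (a : R).
Hypothesis ha : 0 < a.

Lemma cmxZ p q (k : R) (M : 'M[R]_(p, q)) : cmx (k *: M) = (k%:C)%C *: cmx M.
Proof. by apply/matrixP => i j; rewrite !mxE rmorphM. Qed.

Lemma transferZ (x : R) : x != 0 ->
  transfer src dst (fun e => a * w e) s sigma2 x =
  ((cfac a s / a)%:C)%C *: transfer src dst w s sigma2 (x / a).
Proof.
move=> x0; rewrite /transfer laplacianZ input_mxZ !cmxZ.
have a0 : a != 0 by rewrite gt_eqF.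
have hX : (Complex 0 x) *: (1%:M : 'M[R[i]]_n) + (a%:C)%C *: cmx (laplacian src dst w)
    = (a%:C)%C *: ((Complex 0 (x / a)) *: 1%:M + cmx (laplacian src dst w)).
  rewrite scalerDr scalerA; congr (_ *: _ + _).
  apply/eqP; rewrite eq_complex /=; apply/andP; split; apply/eqP; field; exact: a0.
have xa0 : x / a != 0 by rewrite mulf_neq0 // invr_eq0.
have hu := X_unit (laplacian_sym src dst w) xa0.
rewrite hX invmxZ; last first.
  by rewrite unitmxZ // unitfE; apply/eqP => -[]; apply/eqP.
by rewrite -!scalemxAr -!scalemxAl !scalerA rmorphM fmorphV.
Qed.

Definition integrand (w' : 'I_m -> R) (x : R) : R :=
  complex.Re (\tr (ctr (transfer src dst w' s sigma2 x) *m transfer src dst w' s sigma2 x)).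

Lemma ctrZ p q (k : R) (M : 'M[R[i]]_(p, q)) : ctr ((k%:C)%C *: M) = (k%:C)%C *: ctr M.
Proof. by apply/matrixP => i j; rewrite !mxE rmorphM; congr (_ * _); exact: conjc_real. Qed.

Lemma integrandZ (x : R) : x != 0 ->
  integrand (fun e => a * w e) x = (cfac a s / a) ^+ 2 * integrand w (x / a).
Proof.
move=> x0; rewrite /integrand transferZ // ctrZ -scalemxAr -scalemxAl scalerA mxtraceZ.
by rewrite -rmorphM ReM ReC ImC mul0r subr0 expr2.
Qed.

Lemma ctrE p q (M : 'M[R[i]]_(p, q)) i j : ctr M i j = conjc (M j i).
Proof. by rewrite !mxE. Qed.

Lemma integrand_ge0 (w' : 'I_m -> R) (x : R) : 0 <= integrand w' x.
Proof.
rewrite /integrand /mxtrace Re_sum; apply: sumr_ge0 => i _.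
rewrite mxE Re_sum; apply: sumr_ge0 => k _.
by rewrite ctrE ReM ReJ ImJ mulNr opprK -!expr2 addr_ge0 // sqr_ge0.
Qed.
End Transfer.

Import numFieldNormedType.Exports.
Set Implicit Arguments.
Unset Strict Implicit.
Section Meas.
Variable R : realType.
Local Open Scope classical_set_scope.

Lemma minv : measurable_fun [set: R] (@GRing.inv R).
Proof.
rewrite -(setvU [set (0:R)]).
apply/measurable_funU => //; first exact: measurableC.
split; last exact: measurable_fun_set1.
apply: open_continuous_measurable_fun.
  apply: closed_openC; apply: accessible_closed_set1; apply: hausdorff_accessible.
  exact: norm_hausdorff.
move=> x; rewrite inE /= => x0; apply: inv_continuous; exact/eqP.
Qed.

Definition cmeas (g : R -> R[i]) :=
  measurable_fun [set: R] (fun x => complex.Re (g x)) /\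
  measurable_fun [set: R] (fun x => complex.Im (g x)).

Lemma cmeas_cst c : cmeas (fun _ => c).
Proof. by split; exact: measurable_cst. Qed.

Lemma cmeas_iy : cmeas (fun x => Complex 0 x).
Proof. by split => /=; [exact: measurable_cst | exact: measurable_id]. Qed.

Lemma cmeas_add f g : cmeas f -> cmeas g -> cmeas (fun x => f x + g x).
Proof.
move=> [f1 f2] [g1 g2]; split.
- under eq_fun do rewrite ReD; exact: measurable_funD.
- under eq_fun do rewrite ImD; exact: measurable_funD.
Qed.

Lemma cmeas_mul f g : cmeas f -> cmeas g -> cmeas (fun x => f x * g x).
Proof.
move=> [f1 f2] [g1 g2]; split.
- under eq_fun do rewrite ReM; apply: measurable_funB; exact: measurable_funM.
- under eq_fun do rewrite ImM; apply: measurable_funD; exact: measurable_funM.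
Qed.

Lemma cmeas_opp f : cmeas f -> cmeas (fun x => - f x).
Proof.
move=> [f1 f2]; split.
- under eq_fun do rewrite ReN; exact: measurable_funN.
- under eq_fun do rewrite ImN; exact: measurable_funN.
Qed.

Lemma cmeas_conj f : cmeas f -> cmeas (fun x => conjc (f x)).
Proof.
move=> [f1 f2]; split.
- by under eq_fun do rewrite ReJ.
- under eq_fun do rewrite ImJ; exact: measurable_funN.
Qed.

Lemma cmeas_inv f : cmeas f -> cmeas (fun x => (f x)^-1).
Proof.
move=> [f1 f2].
have hn : measurable_fun [set: R]
    (fun x => (complex.Re (f x) ^+ 2 + complex.Im (f x) ^+ 2)^-1).
  apply: (measurableT_comp minv); apply: measurable_funD; exact: measurable_funX.
split.
- under eq_fun do rewrite ReV; exact: measurable_funM.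
- under eq_fun do rewrite ImV; apply: measurable_funN; exact: measurable_funM.
Qed.

Lemma cmeas_if (b : R -> bool) f g : measurable_fun [set: R] b ->
  cmeas f -> cmeas g -> cmeas (fun x => if b x then f x else g x).
Proof.
move=> mb [f1 f2] [g1 g2]; split.
- rewrite (_ : (fun x => _) = (fun x => if b x then complex.Re (f x) else complex.Re (g x))).
    exact: measurable_fun_ifT.
  by apply/funext => x; case: (b x).
- rewrite (_ : (fun x => _) = (fun x => if b x then complex.Im (f x) else complex.Im (g x))).
    exact: measurable_fun_ifT.
  by apply/funext => x; case: (b x).
Qed.

Lemma cmeas_sum (I : Type) (r : seq I) (P : pred I) (F : I -> R -> R[i]) :
  (forall i, cmeas (F i)) -> cmeas (fun x => \sum_(i <- r | P i) F i x).
Proof.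
move=> hF; elim: r => [|i r IH].
  rewrite (_ : (fun x => _) = fun _ => 0); first exact: cmeas_cst.
  by apply/funext => x; rewrite big_nil.
rewrite (_ : (fun x => _) = fun x => if P i then F i x + \sum_(j <- r | P j) F j x
                                     else \sum_(j <- r | P j) F j x).
  by case: (P i) => //; exact: cmeas_add.
by apply/funext => x; rewrite big_cons.
Qed.

Lemma cmeas_prod (I : Type) (r : seq I) (P : pred I) (F : I -> R -> R[i]) :
  (forall i, cmeas (F i)) -> cmeas (fun x => \prod_(i <- r | P i) F i x).
Proof.
move=> hF; elim: r => [|i r IH].
  rewrite (_ : (fun x => _) = fun _ => 1); first exact: cmeas_cst.
  by apply/funext => x; rewrite big_nil.
rewrite (_ : (fun x => _) = fun x => if P i then F i x * \prod_(j <- r | P j) F j x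
                                     else \prod_(j <- r | P j) F j x).
  by case: (P i) => //; exact: cmeas_mul.
by apply/funext => x; rewrite big_cons.
Qed.

Definition mmeas p q (F : R -> 'M[R[i]]_(p, q)) := forall i j, cmeas (fun x => F x i j).

Lemma mmeas_cst p q (M : 'M[R[i]]_(p, q)) : mmeas (fun _ => M).
Proof. by move=> i j; exact: cmeas_cst. Qed.

Lemma mmeas_add p q (F G : R -> 'M[R[i]]_(p, q)) : mmeas F -> mmeas G ->
  mmeas (fun x => F x + G x).
Proof.
move=> hF hG i j; rewrite (_ : (fun x => _) = fun x => F x i j + G x i j).
  exact: cmeas_add.
by apply/funext => x; rewrite mxE.
Qed.

Lemma mmeas_mul p q r (F : R -> 'M[R[i]]_(p, q)) (G : R -> 'M[R[i]]_(q, r)) :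
  mmeas F -> mmeas G -> mmeas (fun x => F x *m G x).
Proof.
move=> hF hG i j; rewrite (_ : (fun x => _) = fun x => \sum_k F x i k * G x k j).
  by apply: cmeas_sum => k; exact: cmeas_mul.
by apply/funext => x; rewrite mxE.
Qed.

Lemma mmeas_scale p q (c : R -> R[i]) (F : R -> 'M[R[i]]_(p, q)) : cmeas c -> mmeas F ->
  mmeas (fun x => c x *: F x).
Proof.
move=> hc hF i j; rewrite (_ : (fun x => _) = fun x => c x * F x i j).
  exact: cmeas_mul.
by apply/funext => x; rewrite mxE.
Qed.

Lemma mmeas_ctr p q (F : R -> 'M[R[i]]_(p, q)) : mmeas F -> mmeas (fun x => ctr (F x)).
Proof.
move=> hF i j; rewrite (_ : (fun x => _) = fun x => conjc (F x j i)).
  exact: cmeas_conj.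
by apply/funext => x; rewrite !mxE.
Qed.

Lemma cmeas_det k (F : R -> 'M[R[i]]_k) : mmeas F -> cmeas (fun x => \det (F x)).
Proof.
move=> hF; rewrite /determinant; apply: cmeas_sum => s.
apply: cmeas_mul; first exact: cmeas_cst.
by apply: cmeas_prod => i; exact: hF.
Qed.

Lemma mmeas_adj k (F : R -> 'M[R[i]]_k) : mmeas F -> mmeas (fun x => \adj (F x)).
Proof.
move=> hF i j; rewrite (_ : (fun x => _) = fun x => cofactor (F x) j i).
  apply: cmeas_mul; first exact: cmeas_cst.
  apply: cmeas_det => a b.
  rewrite (_ : (fun x => _) = fun x => F x (lift j a) (lift i b)); first exact: hF.
  by apply/funext => x; rewrite !mxE.
by apply/funext => x; rewrite mxE.
Qed.

Lemma mmeas_inv k (F : R -> 'M[R[i]]_k) : mmeas F -> mmeas (fun x => invmx (F x)).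
Proof.
move=> hF i j.
rewrite (_ : (fun x => _) = fun x => if F x \in unitmx
   then (\det (F x))^-1 * \adj (F x) i j else F x i j).
  apply: cmeas_if.
  - rewrite (_ : (fun x => _) = fun x => ~~ ((complex.Re (\det (F x)) == 0) &&
                                           (complex.Im (\det (F x)) == 0))).
      have [h1 h2] := cmeas_det hF.
      apply: measurable_neg; apply: measurable_and; apply: measurable_fun_eqr => //;
        exact: measurable_cst.
    by apply/funext => x; rewrite unitmxE unitfE eq_complex.
  - apply: cmeas_mul; first exact/cmeas_inv/cmeas_det.
    exact: mmeas_adj.
  - exact: hF.
apply/funext => x; rewrite /invmx; case: ifP => // _.
by rewrite mxE.
Qed.

Lemma mmeas_scale1 k (c : R -> R[i]) : cmeas c -> mmeas (fun x => c x *: (1%:M : 'M[R[i]]_k)).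
Proof. by move=> hc; apply: mmeas_scale => //; exact: mmeas_cst. Qed.

End Meas.

Section M2.
Variables (R : realType) (n m : nat) (src dst : 'I_m -> 'I_n)
  (s : uncertainty) (sigma2 : 'I_(nnoise n m s) -> R).
Local Open Scope classical_set_scope.

Lemma mmeas_transfer (w : 'I_m -> R) : mmeas (fun x => transfer src dst w s sigma2 x).
Proof.
rewrite /transfer; apply: mmeas_mul; last exact: mmeas_cst.
apply: mmeas_mul; last exact: mmeas_cst.
apply: mmeas_mul; first exact: mmeas_cst.
apply: mmeas_inv; apply: mmeas_add; last exact: mmeas_cst.
apply: mmeas_scale1; exact: cmeas_iy.
Qed.

Lemma integrand_meas (w : 'I_m -> R) :
  measurable_fun [set: R] (fun x => integrand R n m src dst s sigma2 w x).
Proof.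
rewrite /integrand /mxtrace.
have h := mmeas_mul (mmeas_ctr (mmeas_transfer w)) (mmeas_transfer w).
have [h1 _] := cmeas_sum (index_enum _) (fun _ => true) (fun i => h i i).
exact: h1.
Qed.
End M2.

Section Dil.
Variable R : realType.
Local Open Scope classical_set_scope.
Local Open Scope ereal_scope.

Lemma lebesgue_dilate (a : R) (ha : (0 < a)%R) (A : set R) : measurable A ->
  lebesgue_measure ((fun x : R => (x / a)%R) @^-1` A) = a%:E * lebesgue_measure A.
Proof.
have mphi : measurable_fun [set: R] (fun x : R => (x / a)%R) by exact: mulrr_measurable.
have ia : (0 <= a^-1)%R by rewrite invr_ge0 ltW.
have key : forall X : set R, ocitv X -> lebesgue_measure X =
    (mscale (NngNum ia) (pushforward lebesgue_measure
   ((fun x : R => (x / a)%R) : measurableTypeR R -> measurableTypeR R))) X.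
  move=> mp _ [[x1 x2] _ <-]; rewrite /mscale /=.
  rewrite (_ : pushforward _ _ _ = lebesgue_measure ((fun x : R => (x / a)%R) @^-1` `]x1, x2])); last by [].
  have -> : (fun x : R => (x / a)%R) @^-1` `]x1, x2] = `](x1 * a)%R, (x2 * a)%R]%classic.
    apply/seteqP; split => x /=; rewrite !in_itv /= ltr_pdivlMr // ler_pdivrMr //.
  rewrite !lebesgue_measure_itv /= !lte_fin ltr_pM2r //.
  case: ifP => _; last by rewrite mule0.
  rewrite -EFinB -EFinM; congr EFin; field; exact: lt0r_neq0.
move=> mA; rewrite (lebesgue_measure_unique (key mphi) mA).
rewrite /mscale /= muleA -EFinM mulfV ?mul1e //; exact: lt0r_neq0.
Qed.

Lemma integral_dilate (a : R) (ha : (0 < a)%R) (f : R -> R) :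
  measurable_fun [set: R] f -> (forall x, (0 <= f x)%R) ->
  \int[lebesgue_measure]_(x in [set: R]) (f (x / a)%R)%:E =
  a%:E * \int[lebesgue_measure]_(x in [set: R]) (f x)%:E.
Proof.
move=> mf f0.
have mphi : measurable_fun [set: R] (fun x : R => (x / a)%R) by exact: mulrr_measurable.
have mfE : measurable_fun [set: R] (fun y => (f y)%:E) by exact/measurable_EFinP.
have -> : \int[lebesgue_measure]_(x in [set: R]) (f (x / a)%R)%:E =
    \int[lebesgue_measure]_(x in (fun x : R => (x / a)%R) @^-1` [set: R])
       ((fun y => (f y)%:E) \o (fun x : R => (x / a)%R)) x by rewrite preimage_setT.
rewrite -(@ge0_integral_pushforward _ _ (measurableTypeR R) (measurableTypeR R) R _ mphi lebesgue_measure) //; last by move=> y _; rewrite lee_fin.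
rewrite (eq_measure_integral (mscale (NngNum (ltW ha)) lebesgue_measure)).
  by rewrite ge0_integral_mscale //= => y _; rewrite lee_fin.
by move=> B mB _; exact: (lebesgue_dilate ha mB).
Qed.
End Dil.

Section Final.
Variables (R : realType) (n m : nat) (src dst : 'I_m -> 'I_n) (w : 'I_m -> R)
  (s : uncertainty) (a : R).
Hypothesis ha : 0 < a.
Local Open Scope classical_set_scope.

Definition Kf : R := (cfac a s / a) ^+ 2 * a.

Lemma Kf_gt0 : 0 < Kf.
Proof.
rewrite /Kf mulr_gt0 // exprn_gt0 // divr_gt0 //.
by case: s => /=.
Qed.

Lemma intI_scale (sigma2 : 'I_(nnoise n m s) -> R) :
  (\int[lebesgue_measure]_(x in [set: R])
     (integrand R n m src dst s sigma2 (fun e => a * w e) x)%:E =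
   Kf%:E * \int[lebesgue_measure]_(x in [set: R])
     (integrand R n m src dst s sigma2 w x)%:E)%E.
Proof.
have mD : measurable ([set: R] `\ 0%R) by exact: measurableD.
have mh w' : measurable_fun [set: R] (fun x => (integrand R n m src dst s sigma2 w' x)%:E).
  apply/measurable_EFinP; exact: integrand_meas.
have mh2 : measurable_fun [set: R]
    (fun x => ((cfac a s / a) ^+ 2 * integrand R n m src dst s sigma2 w (x / a))%:E).
  apply/measurable_EFinP; apply: measurable_funM; first exact: measurable_cst.
  apply: (measurableT_comp (integrand_meas _ _ _ _)); exact: mulrr_measurable.
rewrite -(@integral_setD1 R _ 0%R [set: R]) //; last exact: measurable_funS (mh _).
transitivity (\int[lebesgue_measure]_(x in [set: R] `\ 0%R)
    ((cfac a s / a) ^+ 2 * integrand R n m src dst s sigma2 w (x / a))%:E)%E.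
  apply: eq_integral => x; rewrite inE => -[_ x0]; rewrite integrandZ; [by [] | exact: ha | exact/eqP].
rewrite (@integral_setD1 R _ 0%R [set: R]); [|exact: mD|exact: measurable_funS mh2].
under eq_integral do rewrite EFinM.
have mf3 : measurable_fun [set: R] (fun x => (integrand R n m src dst s sigma2 w (x / a))%:E).
  apply/measurable_EFinP; apply: (measurableT_comp (integrand_meas _ _ _ _)).
  exact: mulrr_measurable.
have f3 : forall x, [set: R] x -> (0 <= (integrand R n m src dst s sigma2 w (x / a))%:E)%E.
  by move=> x _; rewrite lee_fin; exact: integrand_ge0.
have k3 : (0 <= ((cfac a s / a) ^+ 2)%:E)%E by rewrite lee_fin; exact: sqr_ge0.
rewrite (ge0_integralZl lebesgue_measure measurableT mf3 f3 k3).
move: (integrand_meas src dst sigma2 w) (integrand_ge0 R n m src dst s sigma2 w).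
generalize (integrand R n m src dst s sigma2 w) => F mF F0.
rewrite (integral_dilate ha mF F0).
by rewrite /Kf EFinM muleA.
Qed.

Lemma rho_ssE (w' : 'I_m -> R) (sigma2 : 'I_(nnoise n m s) -> R) :
  rho_ss src dst w' s sigma2 = fine (\int[lebesgue_measure]_(x in [set: R])
     (integrand R n m src dst s sigma2 w' x)%:E)%E / (2 * pi).
Proof. by []. Qed.

Lemma rho_scale (sigma2 : 'I_(nnoise n m s) -> R) :
  rho_ss src dst (fun e => a * w e) s sigma2 = Kf * rho_ss src dst w s sigma2.
Proof.
rewrite !rho_ssE intI_scale.
move: (integrand_ge0 R n m src dst s sigma2 w).
generalize (integrand R n m src dst s sigma2 w) => F F0.
have : (0 <= \int[lebesgue_measure]_(x in [set: R]) (F x)%:E)%E.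
  by apply: integral_ge0 => x _; rewrite lee_fin.
move: (\int[lebesgue_measure]_(x in [set: R]) (F x)%:E)%E => I I0.
rewrite mulrA; congr (_ / _).
case: I I0 => [r| |] // _.
by rewrite gt0_muley ?lte_fin ?Kf_gt0 //= mulr0.
Qed.

End Final.

Section Der.
Variable R : realType.

Lemma nd0 (g : R -> R) (x : R) : ~ derivable g x 1 -> derive1 g x = 0.
Proof.
move=> ng; rewrite derive1E /derive /lim /lim_in getPN // => l hl.
by apply: ng; exact: (cvgP l hl).
Qed.

Lemma derive1_scale (K : R) (K0 : K != 0) (f : R -> R) (x : R) :
  derive1 (fun y => K * f y) x = K * derive1 f x.
Proof.
case: (pselect (derivable f x 1)) => df.
  by rewrite !derive1E; exact: (deriveZ K df).
have ndK : ~ derivable (fun y => K * f y) x 1.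
  move=> dK; apply: df.
  have -> : f = K^-1 \*: (fun y => K * f y).
    by apply/funext => y; change (f y = K^-1 * (K * f y)); rewrite mulKf.
  exact: (derivableZ (k:=K^-1) dK).
by rewrite !nd0 // mulr0.
Qed.
End Der.

Theorem theorem11 (R : realType) (n m : nat) (src dst : 'I_m -> 'I_n)
  (w : 'I_m -> R) (s : uncertainty) (sigma2 : 'I_(nnoise n m s) -> R) :
  simple_graph src dst ->
  connected_graph src dst ->
  (forall e, 0 < w e) ->
  (forall k, 0 < sigma2 k) ->
  forall alpha : R, 0 < alpha ->
  forall i j : 'I_(nnoise n m s),
    (centrality src dst (fun e => alpha * w e) s sigma2 j <
       centrality src dst (fun e => alpha * w e) s sigma2 i)
    <->
    (centrality src dst w s sigma2 j < centrality src dst w s sigma2 i).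
Proof.
move=> _ _ _ _ alpha ha i j.
have K0 := Kf_gt0 s ha.
have hc k : centrality src dst (fun e => alpha * w e) s sigma2 k =
    Kf s alpha * centrality src dst w s sigma2 k.
  rewrite /centrality -derive1_scale; last exact: lt0r_neq0.
  congr derive1; apply/funext => x.
  exact: rho_scale.
by rewrite !hc ltr_pM2l.
Qed.
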